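(* Let $N\ge 2$, fix real $\Omega\neq 0$ and real $\delta$, and let $J^{(1)}=(J^{(1)}_{i,j})_{1\le i<j\le N}$ and $J^{(2)}=(J^{(2)}_{i,j})_{1\le i<j\le N}$ be real coupling families with $J^{(1)}\neq J^{(2)}$. For $k=1,2$ let $$\hat{H}_k = \Omega \sum_{i=1}^N \hat{\sigma}_i^x + \delta \sum_{i=1}^N \hat{\sigma}_i^z + \sum_{1\le i<j\le N} J^{(k)}_{i,j} \hat{\sigma}_i^z \hat{\sigma}_j^z,$$ and let $|\Psi_k\rangle$ be the (unique up to phase) ground state of $\hat H_k$. Then $|\Psi_1\rangle$ and $|\Psi_2\rangle$ are not equal (not proportional), i.e. no vector is simultaneously a ground state of $\hat H_1$ and of $\hat H_2$.
   Context: $\hat\sigma_i^x,\hat\sigma_i^z$ are Pauli matrices acting on the $i$-th factor of $(\mathbb{C}^2)^{\otimes N}$. For $\Omega\neq0$ the ground state of such a Hamiltonian is nondegenerate and has nonzero overlap with every computational basis state $|\sigma_1,\dots,\sigma_N\rangle$ (simultaneous eigenstates of all $\hat\sigma_i^z$). *)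

(* Defs.v *)
From HB Require Import structures.
From mathcomp Require Import all_boot all_order all_algebra.
From mathcomp Require Import complex.
Set Implicit Arguments. Unset Strict Implicit. Unset Printing Implicit Defensive.
Import Order.TTheory GRing.Theory Num.Theory.
Local Open Scope ring_scope.
Local Open Scope complex_scope.

(* Computational basis of (C^2)^{(x)N}: spin configurations sigma : 'I_N -> bool,
   true <-> sigma_i = +1 (spin up), false <-> sigma_i = -1.
   A state of the N-spin system is the family of its amplitudes in this basis. *)
Notation config N := {ffun 'I_N -> bool}.
Notation state R N := {ffun config N -> R[i]}.
Notation operator R N := (state R N -> state R N).

Definition spin (R : rcfType) (b : bool) : R[i] := if b then 1 else -1.

Definition flip N (i : 'I_N) (s : config N) : config N :=
  [ffun k => if k == i then ~~ s k else s k].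

(* Pauli operators acting on the i-th tensor factor, in the computational basis:
   sigma^x_i |s> = |flip_i s>,  sigma^z_i |s> = spin(s_i) |s>. *)
Definition sigmax (R : rcfType) N (i : 'I_N) : operator R N :=
  fun psi => [ffun s : config N => psi (flip i s)].
Definition sigmaz (R : rcfType) N (i : 'I_N) : operator R N :=
  fun psi => [ffun s : config N => spin R (s i) * psi s].

Definition hamiltonian (R : rcfType) (N : nat) (Omega delta : R)
    (J : 'I_N -> 'I_N -> R) : operator R N :=
  fun psi =>
    (Omega%:C *: \sum_(i < N) sigmax i psi
     + delta%:C *: \sum_(i < N) sigmaz i psi
     + \sum_(i < N) \sum_(j < N | (i < j)%N) (J i j)%:C *: sigmaz i (sigmaz j psi))%R.

Definition eigen (R : rcfType) N (H : operator R N) (E : R[i]) (psi : state R N) :=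
  psi != 0 /\ H psi = E *: psi.

Definition ground_state (R : rcfType) N (H : operator R N) (psi : state R N) :=
  exists E : R[i], eigen H E psi /\
    forall (mu : R[i]) (phi : state R N), eigen H mu phi -> E <= mu.

(* Main.v *)
Require Import Defs.
From HB Require Import structures.
From mathcomp Require Import all_boot all_order all_algebra.
From mathcomp Require Import complex.
From mathcomp Require Import spectral sesquilinear.
From mathcomp Require Import ring.
Import Order.TTheory GRing.Theory Num.Theory.
Local Open Scope ring_scope.

Section MxSpec.
Variable C : numClosedFieldType.

Lemma mx_spec n (A : 'M[C]_n) (E : C) :
  map_mx Num.conj A^T = A ->
  (forall mu (v : 'rV_n), v != 0 -> v *m A = mu *: v -> E <= mu) ->
  forall v : 'rV_n,
   0 <= (v *m A *m map_mx Num.conj v^T) 0 0 - E * (v *m map_mx Num.conj v^T) 0 0 /\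
   ((v *m A *m map_mx Num.conj v^T) 0 0 - E * (v *m map_mx Num.conj v^T) 0 0 = 0 ->
     v *m A = E *: v).
Proof.
move=> hA hmin v.
have An : A \is normalmx by rewrite qualifE /= hA.
have Aeq := orthomx_spectralP An.
set P := spectralmx A in Aeq; set d := spectral_diag A in Aeq.
have Pu : P \is unitarymx by apply: spectral_unitarymx.
have PU : P \in unitmx by apply: unitarymx_unit.
have iP : invmx P = map_mx Num.conj P^T by rewrite invmx_unitary.
set w := v *m invmx P.
have vw : v = w *m P by rewrite /w mulmxKV.
have vA : v *m A = w *m diag_mx d *m P.
  by rewrite Aeq vw !mulmxA mulmxKV.
have vc : map_mx Num.conj v^T = invmx P *m map_mx Num.conj w^T.
  by rewrite vw trmx_mul map_mxM iP.
have e1 : (v *m A *m map_mx Num.conj v^T) 0 0 =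
   \sum_k d 0 k * (w 0 k * (w 0 k)^*).
  rewrite vA vc !mulmxA -[w *m _ *m P *m _]mulmxA mulmxV // mulmx1 mul_mx_diag !mxE.
  by apply: eq_bigr => k _; rewrite !mxE -mulrA mulrCA.
have e2 : (v *m map_mx Num.conj v^T) 0 0 = \sum_k (w 0 k * (w 0 k)^*).
  rewrite vc vw !mulmxA mulmxKV // !mxE.
  by apply: eq_bigr => k _; rewrite !mxE.
have dk : forall k, E <= d 0 k.
  move=> k; apply: (hmin _ (delta_mx 0 k *m P)).
    apply: contraTneq isT => /(congr1 (mulmx^~ (invmx P))) /=.
    rewrite mul0mx mulmxK // => /matrixP /(_ 0 k); rewrite !mxE !eqxx /=.
    by move/eqP; rewrite oner_eq0.
  rewrite {1}Aeq !mulmxA mulmxK // mul_mx_diag scalemxAl; congr (_ *m _).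
  apply/matrixP => i j; rewrite !mxE.
  by rewrite ord1 eqxx /=; case: (j =P k) => [->|_]; rewrite ?mulr1 ?mul1r ?mulr0 ?mul0r.
have ediff : (v *m A *m map_mx Num.conj v^T) 0 0 - E * (v *m map_mx Num.conj v^T) 0 0
   = \sum_k (d 0 k - E) * (w 0 k * (w 0 k)^*).
  by rewrite e1 e2 mulr_sumr -sumrB; apply: eq_bigr => k _; rewrite mulrBl.
have ge0 : forall k, 0 <= (d 0 k - E) * (w 0 k * (w 0 k)^*).
  by move=> k; rewrite mulr_ge0 ?subr_ge0 ?dk // -normCK exprn_ge0.
rewrite ediff; split; first by apply: sumr_ge0 => k _; apply: ge0.
move=> h0; have hk := psumr_eq0P (fun k _ => ge0 k) h0.
rewrite vA vw scalemxAl; congr (_ *m _).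
rewrite mul_mx_diag; apply/matrixP => i j; rewrite mxE [RHS]mxE ord1.
have := hk j isT; move/eqP; rewrite mulf_eq0 subr_eq0 => /orP[/eqP->|]; first by rewrite mulrC.
by rewrite -normCK expf_eq0 /= normr_eq0 => /eqP->; rewrite !mulr0 mul0r.
Qed.
End MxSpec.

Section FunSpec.
Variable C : numClosedFieldType.
Variable T : finType.

Lemma sum_ev (F : T -> C) : \sum_(k < #|T|) F (enum_val k) = \sum_t F t.
Proof. by rewrite -big_enum_val. Qed.

Lemma fun_spec (K : T -> T -> C) (E : C) :
 (forall s t, K t s = (K s t)^*) ->
 (forall mu (f : {ffun T -> C}), f != 0 ->
     (forall s, \sum_t f t * K t s = mu * f s) -> E <= mu) ->
 forall u : {ffun T -> C},
   0 <= \sum_s (\sum_t u t * K t s) * (u s)^* - E * \sum_s u s * (u s)^* /\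
   (\sum_s (\sum_t u t * K t s) * (u s)^* - E * \sum_s u s * (u s)^* = 0 ->
      forall s, \sum_t u t * K t s = E * u s).
Proof.
move=> hK hmin u.
pose A : 'M[C]_#|T| := \matrix_(k, l) K (enum_val k) (enum_val l).
pose v : 'rV[C]_#|T| := \row_k u (enum_val k).
have hA : map_mx Num.conj A^T = A.
  by apply/matrixP => k l; rewrite !mxE -hK.
have vA : forall l, (v *m A) 0 l = \sum_t u t * K t (enum_val l).
  by move=> l; rewrite mxE -sum_ev; apply: eq_bigr => k _; rewrite !mxE.
have e1 : (v *m A *m map_mx Num.conj v^T) 0 0 = \sum_s (\sum_t u t * K t s) * (u s)^*.
  by rewrite mxE -sum_ev; apply: eq_bigr => k _; rewrite vA !mxE.
have e2 : (v *m map_mx Num.conj v^T) 0 0 = \sum_s u s * (u s)^*.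
  by rewrite mxE -sum_ev; apply: eq_bigr => k _; rewrite !mxE.
have hmin' : forall mu (w : 'rV_#|T|), w != 0 -> w *m A = mu *: w -> E <= mu.
  move=> mu w wn0 wA; pose f := [ffun t => w 0 (enum_rank t)].
  apply: (hmin mu f).
    apply: contraNneq wn0 => f0; apply/eqP/matrixP => i k; rewrite ord1.
    by have := congr1 (fun g : {ffun T -> C} => g (enum_val k)) f0; rewrite !ffunE enum_valK !mxE.
  move=> s; have := congr1 (fun M : 'M_(1, _) => M 0 (enum_rank s)) wA.
  rewrite /= mxE [RHS]mxE ffunE -sum_ev => <-.
  by apply: eq_bigr => k _; rewrite ffunE enum_valK !mxE enum_rankK.
have [h1 h2] := @mx_spec C _ _ _ hA hmin' v.
rewrite -e1 -e2; split => // /h2 vAE s.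
have := congr1 (fun M : 'M_(1, _) => M 0 (enum_rank s)) vAE.
by rewrite /= vA enum_rankK !mxE enum_rankK.
Qed.
End FunSpec.

Local Open Scope complex_scope.
Set Implicit Arguments. Unset Strict Implicit.

Section Phys.
Variables (R : rcfType) (N : nat).
Local Notation C := (R[i]).

Lemma flipK (i : 'I_N) : involutive (@flip N i).
Proof.
move=> s; apply/ffunP => k; rewrite !ffunE.
by case: (k == i); rewrite ?negbK.
Qed.

Lemma flip_eq (i : 'I_N) s t : (flip i s == t) = (flip i t == s).
Proof.
apply/eqP/eqP => <-; exact: flipK.
Qed.

Lemma spin_flip (i : 'I_N) s k :
  spin R (flip i s k) = (if k == i then -1 else 1) * spin R (s k).
Proof. by rewrite ffunE /spin; case: (k == i); case: (s k); rewrite ?mul1r ?mulN1r ?opprK. Qed.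

Lemma spin_sq (b : bool) : spin R b * spin R b = 1.
Proof. by case: b; rewrite /spin ?mulr1 ?mulrNN ?mulr1. Qed.

Definition Jp (c : 'I_N -> 'I_N -> C) (s : config N) : C :=
  \sum_(i < N) \sum_(j < N | (i < j)%N) c i j * (spin R (s i) * spin R (s j)).

Definition V (delta : R) (J : 'I_N -> 'I_N -> R) (s : config N) : C :=
  delta%:C * \sum_(i < N) spin R (s i) + Jp (fun i j => (J i j)%:C) s.

Lemma scC (a b : C) : a *: b = a * b.
Proof. by []. Qed.

Lemma hamE Omega delta J (psi : state R N) s :
  hamiltonian Omega delta J psi s =
  Omega%:C * \sum_i psi (flip i s) + V delta J s * psi s.
Proof.
rewrite /hamiltonian !ffunE !scC !sum_ffunE /V /Jp mulrDl -addrA; congr (_ * _ + (_ + _)).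
- by apply: eq_bigr => i _; rewrite ffunE.
- rewrite -mulrA mulr_suml; congr (_ * _); apply: eq_bigr => i _.
  by rewrite ffunE.
rewrite mulr_suml; apply: eq_bigr => i _; rewrite sum_ffunE mulr_suml.
apply: eq_bigr => j _; rewrite !ffunE scC.
by rewrite !mulrA.
Qed.

Definition K Omega delta J (t s : config N) : C :=
  Omega%:C * (\sum_(i < N) (flip i s == t)%:R) + (s == t)%:R * V delta J s.

Lemma sum_pick (F : config N -> C) a : \sum_t F t * (a == t)%:R = F a.
Proof.
rewrite (bigD1 a) //= eqxx mulr1 big1 ?addr0 // => t ta.
by rewrite eq_sym (negbTE ta) mulr0.
Qed.

Lemma hamK Omega delta J (psi : state R N) s :
  hamiltonian Omega delta J psi s = \sum_t psi t * K Omega delta J t s.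
Proof.
rewrite hamE /K; symmetry; under eq_bigr do rewrite mulrDr.
rewrite big_split /=; congr (_ + _).
  under eq_bigr do rewrite mulrCA mulr_sumr.
  rewrite -mulr_sumr exchange_big /=; congr (_ * _).
  by apply: eq_bigr => i _; rewrite sum_pick.
under eq_bigr => t _ do rewrite (mulrC (_%:R)) mulrA.
by rewrite sum_pick mulrC.
Qed.

Lemma realC (x : R) : x%:C \is Num.real.
Proof. by rewrite complex_real. Qed.

Lemma spin_real b : spin R b \is Num.real.
Proof. by case: b; rewrite /spin ?rpredN rpred1. Qed.

Lemma V_real delta J s : V delta J s \is Num.real.
Proof.
rewrite /V /Jp rpredD ?rpredM ?realC ?rpred_sum // => [i _|i _].
  exact: spin_real.
by rewrite rpred_sum // => j _; rewrite !rpredM ?realC ?spin_real.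
Qed.

Lemma K_real Omega delta J t s : K Omega delta J t s \is Num.real.
Proof.
rewrite /K rpredD ?rpredM ?realC ?V_real ?rpred_nat ?rpred_sum //.
by move=> i _; rewrite rpred_nat.
Qed.

Lemma K_sym Omega delta J t s : K Omega delta J t s = K Omega delta J s t.
Proof.
rewrite /K; congr (_ * _ + _).
  by apply: eq_bigr => i _; rewrite flip_eq.
by case: (eqVneq s t) => [->|st] //; rewrite !mul0r.
Qed.

Lemma K_herm Omega delta J t s : K Omega delta J t s = Num.conj (K Omega delta J s t).
Proof. by rewrite conj_Creal ?K_real // K_sym. Qed.

Lemma connect_all (Z : config N -> bool) s0 :
  (forall s i, Z s -> Z (flip i s)) -> Z s0 -> forall t, Z t.
Proof.
move=> hZ Z0 t.
move: {2}#|[pred i | t i != s0 i]| (erefl #|[pred i | t i != s0 i]|) => n.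
elim: n t => [|n IH] t hn.
  suff -> : t = s0 by [].
  apply/ffunP => i; apply/eqP; apply: negbFE.
  by have := card0_eq hn i; rewrite inE.
have : (0 < #|[pred i | t i != s0 i]|)%N by rewrite hn.
case/card_gt0P => i hi.
rewrite -(flipK i t); apply: hZ; apply: IH.
move: hn; rewrite (cardD1 i) hi add1n => -[<-].
apply: eq_card => j; rewrite !inE ffunE.
case: (eqVneq j i) => [->|//].
by move: hi; rewrite inE; case: (t i); case: (s0 i).
Qed.

Definition eps (sg : C) (t : config N) : C := \prod_(i < N) (if t i then sg else 1).

Lemma eps_sq sg t : sg * sg = 1 -> eps sg t * eps sg t = 1.
Proof.
move=> h; rewrite /eps -big_split /= big1 // => i _.
by case: (t i); rewrite ?mulr1.
Qed.

Lemma eps_flip sg i s : sg * sg = 1 -> eps sg (flip i s) = sg * eps sg s.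
Proof.
move=> h.
have e : eps sg (flip i s) * eps sg s = sg.
  rewrite /eps -big_split /= (bigD1 i) //= big1 ?mulr1 => [|j ji].
    by rewrite ffunE eqxx; case: (s i); rewrite ?mulr1 ?mul1r.
  by rewrite ffunE (negbTE ji); case: (s j); rewrite ?mulr1.
by have := congr1 (fun x => x * eps sg s) e; rewrite /= -mulrA eps_sq // mulr1.
Qed.

Lemma eps_real sg t : sg \is Num.real -> eps sg t \is Num.real.
Proof.
by move=> h; rewrite /eps rpred_prod // => i _; case: (t i); rewrite ?rpred1.
Qed.
End Phys.

Section Main.
Variables (R : rcfType) (N : nat).
Local Notation C := (R[i]).

Lemma ground_nz (Omega delta : R) (J : 'I_N -> 'I_N -> R) (psi : state R N) :
  Omega != 0 -> ground_state (hamiltonian Omega delta J) psi ->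
  exists E : C, (forall s, hamiltonian Omega delta J psi s = E * psi s) /\
                (forall s, psi s != 0).
Proof.
move=> hO [E [[psin0 Hpsi] hmin]].
have Hs : forall s, hamiltonian Omega delta J psi s = E * psi s.
  by move=> s; rewrite Hpsi ffunE scC.
exists E; split => //.
have hmin' : forall mu (f : {ffun config N -> C}), f != 0 ->
    (forall s, \sum_t f t * K Omega delta J t s = mu * f s) -> E <= mu.
  move=> mu f fn0 hf; apply: (hmin mu f); split => //.
  by apply/ffunP => s; rewrite hamK ffunE scC hf.
pose sg : C := if Omega < 0 then 1 else -1.
have sgsq : sg * sg = 1 by rewrite /sg; case: ifP => _; rewrite ?mulr1 ?mulrNN ?mulr1.
have sgr : sg \is Num.real by rewrite /sg; case: ifP; rewrite ?rpredN rpred1.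
have OC0 : Omega%:C != 0.
  by apply: contra hO => /eqP h; apply/eqP; exact: (complexI (h : Omega%:C = 0%:C)).
have Osg : Omega%:C * sg = - `|Omega%:C|.
  have hlt : (Omega%:C < 0) = (Omega < 0) := ltcR Omega 0.
  rewrite /sg; case: ifPn => hneg.
    by rewrite mulr1 ltr0_norm ?opprK // hlt.
  rewrite mulrN1 gtr0_norm // lt_def OC0 /=.
  have hle : (0 <= Omega%:C) = (0 <= Omega) := lecR 0 Omega.
  by rewrite hle leNgt.
pose ep := @eps R N sg.
pose phi : state R N := [ffun t => ep t * `|psi t|].
have phif : forall i s, phi (flip i s) = sg * ep s * `|psi (flip i s)|.
  by move=> i s; rewrite ffunE /ep eps_flip.
have epr : forall t, ep t \is Num.real by move=> t; apply: eps_real.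
have epsq : forall t, ep t * ep t = 1 by move=> t; apply: eps_sq.
have [h1 h2] := @fun_spec _ _ _ _ (fun s t => K_herm Omega delta J t s) hmin' phi.
have Qe : forall u : state R N,
    \sum_s (\sum_t u t * K Omega delta J t s) * Num.conj (u s) =
    Omega%:C * \sum_s \sum_i u (flip i s) * Num.conj (u s) +
    \sum_s V delta J s * (u s * Num.conj (u s)).
  move=> u; under eq_bigr do rewrite -hamK hamE mulrDl.
  rewrite big_split /=; congr (_ + _).
    rewrite mulr_sumr; apply: eq_bigr => s _.
    by rewrite -mulrA mulr_suml.
  by apply: eq_bigr => s _; rewrite mulrA.
have Pe : forall s, phi s * Num.conj (phi s) = psi s * Num.conj (psi s).
  move=> s; rewrite ffunE rmorphM /= conj_Creal ?epr // conj_Creal ?normr_real //.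
  by rewrite mulrACA epsq mul1r -expr2 normCK.
pose X := \sum_s \sum_(i < N) `|psi (flip i s)| * `|psi s|.
have Ye : \sum_s \sum_(i < N) phi (flip i s) * Num.conj (phi s) = sg * X.
  rewrite mulr_sumr; apply: eq_bigr => s _; rewrite mulr_sumr; apply: eq_bigr => i _.
  rewrite phif ffunE rmorphM /= conj_Creal ?epr // conj_Creal ?normr_real //.
  have e := epsq s.
  transitivity (sg * (`|psi (flip i s)| * `|psi s|) * (ep s * ep s)); first by ring.
  by rewrite e mulr1.
have Pphi : \sum_s phi s * Num.conj (phi s) = \sum_s psi s * Num.conj (psi s).
  by apply: eq_bigr => s _; exact: Pe.
have Wphi : \sum_s V delta J s * (phi s * Num.conj (phi s)) =
            \sum_s V delta J s * (psi s * Num.conj (psi s)).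
  by apply: eq_bigr => s _; rewrite Pe.
have Qpsi : \sum_s (\sum_t psi t * K Omega delta J t s) * Num.conj (psi s) =
            E * \sum_s psi s * Num.conj (psi s).
  by rewrite mulr_sumr; apply: eq_bigr => s _; rewrite -hamK Hs mulrA.
pose m := `|Omega%:C| * X.
move: h1 h2.
set q := (\sum_s (\sum_t phi t * K Omega delta J t s) * Num.conj (phi s) -
          E * \sum_s phi s * Num.conj (phi s)).
move=> a0 h2.
have aE : Omega%:C * (\sum_s \sum_(i < N) psi (flip i s) * Num.conj (psi s)) = - m - q.
  rewrite /q Qe Ye Wphi Pphi -Qpsi Qe mulrA Osg /m; ring.
have m0 : 0 <= m.
  rewrite /m mulr_ge0 ?normr_ge0 // /X sumr_ge0 // => s _.
  by rewrite sumr_ge0 // => i _; rewrite mulr_ge0 ?normr_ge0.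
have YX : `|\sum_s \sum_(i < N) psi (flip i s) * Num.conj (psi s)| <= X.
  rewrite (le_trans (ler_norm_sum _ _ _)) // ler_sum // => s _.
  rewrite (le_trans (ler_norm_sum _ _ _)) // ler_sum // => i _.
  by rewrite normrM norm_conjC.
have hY : - m - q <= 0 by rewrite -opprD oppr_le0 addr_ge0.
have e1 : `|Omega%:C * (\sum_s \sum_(i < N) psi (flip i s) * Num.conj (psi s))| = m + q.
  by rewrite aE ler0_norm //; ring.
have e2 : `|Omega%:C * (\sum_s \sum_(i < N) psi (flip i s) * Num.conj (psi s))| <= m.
  by rewrite normrM /m ler_wpM2l ?normr_ge0.
have q0 : q = 0.
  by apply/le_anti; rewrite a0 andbT -(gerDl m) -e1.
have Hphi : forall s, hamiltonian Omega delta J phi s = E * phi s.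
  by move=> s; rewrite hamK; apply: h2.
move=> s0; apply/negP => ps0.
have clos : forall s i, psi s == 0 -> psi (flip i s) == 0.
  move=> s i /eqP ps.
  have := Hphi s; rewrite hamE ffunE ps normr0 !mulr0 addr0 => /eqP.
  rewrite mulf_eq0 (negbTE OC0) /= => /eqP hs.
  have : sg * ep s * \sum_(j < N) `|psi (flip j s)| = 0.
    by rewrite mulr_sumr -[RHS]hs; apply: eq_bigr => j _; rewrite phif.
  move/eqP; rewrite mulf_eq0 => /orP[/eqP z|/eqP hsum].
    have ef : ep (flip i s) = sg * ep s by rewrite /ep eps_flip.
    have := epsq (flip i s); rewrite ef z mul0r => /eqP.
    by rewrite eq_sym oner_eq0.
  have := psumr_eq0P (fun j _ => normr_ge0 (psi (flip j s))) hsum (i := i) isT.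
  by move/normr0_eq0 => ->.
apply: (negP psin0); apply/eqP/ffunP => t; rewrite ffunE; apply/eqP.
exact: (connect_all clos ps0 t).
Qed.

Lemma JpB (c1 c2 : 'I_N -> 'I_N -> C) s :
  Jp c1 s - Jp c2 s = Jp (fun i j => c1 i j - c2 i j) s.
Proof.
rewrite /Jp -sumrB; apply: eq_bigr => i _; rewrite -sumrB.
by apply: eq_bigr => j _; rewrite mulrBl.
Qed.

Lemma term2 (a b i j : 'I_N) (s : config N) : (a < b)%N -> (i < j)%N ->
  spin R (s i) * spin R (s j) - spin R (flip a s i) * spin R (flip a s j)
  - spin R (flip b s i) * spin R (flip b s j)
  + spin R (flip a (flip b s) i) * spin R (flip a (flip b s) j)
  = ((i == a) && (j == b))%:R * (4%:R * (spin R (s i) * spin R (s j))).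
Proof.
move=> hab hij; rewrite !spin_flip.
have c1 : ~~ ((i == a) && (i == b)).
  by apply/andP => -[/eqP ia /eqP ib]; move: hab; rewrite -ia -ib ltnn.
have c2 : ~~ ((j == a) && (j == b)).
  by apply/andP => -[/eqP ja /eqP jb]; move: hab; rewrite -ja -jb ltnn.
have c3 : ~~ ((i == a) && (j == a)).
  by apply/andP => -[/eqP ia /eqP ja]; move: hij; rewrite ia ja ltnn.
have c4 : ~~ ((i == b) && (j == b)).
  by apply/andP => -[/eqP ib /eqP jb]; move: hij; rewrite ib jb ltnn.
have c5 : ~~ ((i == b) && (j == a)).
  apply/andP => -[/eqP ib /eqP ja]; move: hij; rewrite ib ja => hba.
  by move: (ltn_trans hab hba); rewrite ltnn.
move: c1 c2 c3 c4 c5.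
by case: (i == a); case: (i == b); case: (j == a); case: (j == b) => //= _ _ _ _ _; ring.
Qed.

Lemma second_diff (c : 'I_N -> 'I_N -> C) (a b : 'I_N) s : (a < b)%N ->
  Jp c s - Jp c (flip a s) - Jp c (flip b s) + Jp c (flip a (flip b s)) =
  4%:R * c a b * (spin R (s a) * spin R (s b)).
Proof.
move=> hab.
transitivity (\sum_(i < N) \sum_(j < N | (i < j)%N)
   c i j * (((i == a) && (j == b))%:R * (4%:R * (spin R (s i) * spin R (s j))))).
  rewrite /Jp -sumrB -sumrB -big_split /=; apply: eq_bigr => i _.
  rewrite -sumrB -sumrB -big_split /=; apply: eq_bigr => j hij.
  by rewrite -(term2 s hab hij); ring.
rewrite (bigD1 a) //= [X in _ + X]big1 ?addr0 => [|i ia].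
  rewrite (bigD1 b) //= [X in _ + X]big1 ?addr0 => [|j /andP[_ jb]].
    by rewrite !eqxx /=; ring.
  by rewrite (negbTE jb) andbF mul0r mulr0.
by rewrite big1 // => j _; rewrite (negbTE ia) /= mul0r mulr0.
Qed.
End Main.

Local Close Scope complex_scope.
Unset Implicit Arguments.

Theorem mainTheorem3 (R : rcfType) (N : nat) (hN : (2 <= N)%N)
    (Omega delta : R) (hOmega : Omega != 0)
    (J1 J2 : 'I_N -> 'I_N -> R)
    (hJ : exists i j : 'I_N, (i < j)%N /\ J1 i j != J2 i j) :
  ~ (exists psi : state R N,
       ground_state (hamiltonian Omega delta J1) psi /\
       ground_state (hamiltonian Omega delta J2) psi).
Proof.
case=> psi [g1 g2].
have [E1 [h1 nz]] := ground_nz hOmega g1.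
have [E2 [h2 _]] := ground_nz hOmega g2.
case: hJ => a [b [hab hne]].
pose c1 := fun i j : 'I_N => ((J1 i j)%:C)%C.
pose c2 := fun i j : 'I_N => ((J2 i j)%:C)%C.
have D : forall s, Jp (fun i j => c1 i j - c2 i j) s = E1 - E2.
  move=> s; apply: (mulIf (nz s)); rewrite -(JpB c1 c2) !mulrBl -(h1 s) -(h2 s) !hamE /V.
  rewrite /c1 /c2; ring.
pose s0 : config N := [ffun => true].
have := second_diff (fun i j => c1 i j - c2 i j) s0 hab.
rewrite !D /s0 !ffunE /spin mulr1.
have -> : E1 - E2 - (E1 - E2) - (E1 - E2) + (E1 - E2) = 0 by ring.
move/esym/eqP; rewrite mulr1 mulf_eq0 pnatr_eq0 /= subr_eq0.
move=> /eqP h; apply: (negP hne); apply/eqP; exact: complexI h.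
Qed.
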